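(* Let $n\ge3$, let $B$ be the ménage board and $\alpha=(\alpha_1,\dots,\alpha_\ell)$ a valid prefix with $1\le\ell<n$. Partition $[n]\setminus\{\alpha_1,\dots,\alpha_\ell\}$ into maximal sets $P_1,\dots,P_m$ of consecutive integers. Then $B_\alpha^c$ is the union of $m$ pairwise disjoint sub-boards, where the $t$-th consists of the (relabeled) squares of $B^c$ lying in columns of $P_t$ and rows $>\ell$; each of these sub-boards is staircase-shaped with exactly $\sum_{p\in P_t}c_p$ squares. Consequently the multiset of sizes of the disjoint staircase-shaped sub-boards of $B_\alpha^c$ is $\mathcal P_\alpha=\{\sum_{p\in P_t}c_p: 1\le t\le m\}$.
   Context: Ménage board $B=\{(i,j)\in[n]\times[n]: j\ne i,\ j+1\not\equiv i\pmod n\}$, with complement $B^c=\{(i,i):i\in[n]\}\cup\{(i+1,i):i\in[n-1]\}\cup\{(1,n)\}$; squares are (row, column). Valid prefix: prefix of the one-line notation of a ménage permutation ($\pi\in S_n$ with $\pi(i)\ne i$, $\pi(i)+1\not\equiv i\pmod n$). Derived board $B_\alpha$: delete rows $1,\dots,\ell$ and columns $\alpha_1,\dots,\alpha_\ell$ of $B$, relabel the rest increasingly as $1,\dots,n-\ell$; $B_\alpha^c$ = complement of $B_\alpha$ in $[n-\ell]\times[n-\ell]$ (equivalently the image of $B^c$ under the same deletion and relabeling). For $i\notin\alpha$: $c_i=0$ if $i<\ell$, $c_i=1$ if $i=\ell$ or $i=n$, $c_i=2$ if $\ell<i<n$. Disjoint sub-boards: no square of one shares a row or column with a square of another. Staircase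 shapes for $m\ge1$: $\mathcal O_{2m-1}=\{(i,i):i\in[m]\}\cup\{(i,i+1):i\in[m-1]\}$, $\mathcal O_{2m-1}^\intercal=\{(i,i):i\in[m]\}\cup\{(i+1,i):i\in[m-1]\}$, $\mathcal E_{2m-2}=\{(i,i):i\in[m-1]\}\cup\{(i+1,i):i\in[m-1]\}$, $\mathcal E_{2m-2}^\intercal=\{(i,i):i\in[m-1]\}\cup\{(i,i+1):i\in[m-1]\}$; a board is staircase-shaped if, after relabeling its occupied rows and columns increasingly as $1,2,\dots$, it equals one of these (empty board = $\mathcal E_0$). *)

(* Defs.v *)
From HB Require Import structures.
From mathcomp Require Import all_boot all_order.
From mathcomp Require Import finmap.

Set Implicit Arguments.
Unset Strict Implicit.
Unset Printing Implicit Defensive.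

Local Open Scope fset_scope.

(* Boards: finite sets of squares (row, column), 1-based. *)
Notation board := {fset (nat * nat)}.

Definition grid (n : nat) : board :=
  [fset x | x in [seq (i, j) | i <- iota 1 n, j <- iota 1 n]].

Definition menage_board (n : nat) : board :=
  [fset x in grid n | (x.2 != x.1) && ((x.2 + 1) %% n != x.1 %% n)].

Definition menage_compl (n : nat) : board :=
  [fset x in grid n | x \notin menage_board n].

Definition menage_perm (n : nat) (s : seq nat) : Prop :=
  perm_eq s (iota 1 n) /\
  forall i, 1 <= i <= n ->
    nth 0 s i.-1 != i /\ (nth 0 s i.-1 + 1) %% n != i %% n.

Definition valid_prefix (n : nat) (alpha : seq nat) : Prop :=
  exists s, menage_perm n s /\ alpha = take (size alpha) s.

(* Relabeling after deleting rows 1..l and columns alpha_1..alpha_l. *)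
Definition relab (alpha : seq nat) (x : nat * nat) : nat * nat :=
  (x.1 - size alpha, x.2 - count (fun a => a < x.2) alpha).

Definition derived_board (n : nat) (alpha : seq nat) : board :=
  relab alpha @` [fset x in menage_board n |
                   (size alpha < x.1) && (x.2 \notin alpha)].

Definition derived_compl (n : nat) (alpha : seq nat) : board :=
  [fset x in grid (n - size alpha) | x \notin derived_board n alpha].

Definition cw (n : nat) (alpha : seq nat) (i : nat) : nat :=
  if i < size alpha then 0
  else if (i == size alpha) || (i == n) then 1 else 2.

Definition consecutive (P : {fset nat}) : Prop :=
  forall x y z, x \in P -> y \in P -> x <= z <= y -> z \in P.

Definition free_cols (n : nat) (alpha : seq nat) : {fset nat} :=
  [fset i in iota 1 n | i \notin alpha].

Definition is_block (n : nat) (alpha : seq nat) (P : {fset nat}) : Prop :=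
  [/\ P != fset0, P `<=` free_cols n alpha, consecutive P &
      forall Q : {fset nat}, consecutive Q -> P `<=` Q ->
        Q `<=` free_cols n alpha -> Q = P].

Definition sub_board (n : nat) (alpha : seq nat) (P : {fset nat}) : board :=
  relab alpha @` [fset x in menage_compl n |
                   (size alpha < x.1) && (x.2 \in P)].

Definition disjoint_boards (S T : board) : Prop :=
  forall x y, x \in S -> y \in T -> x.1 != y.1 /\ x.2 != y.2.

(* Relabel occupied rows and columns increasingly as 1, 2, ... *)
Definition occ_rows (S : board) : seq nat :=
  sort leq (undup [seq x.1 | x <- enum_fset S]).
Definition occ_cols (S : board) : seq nat :=
  sort leq (undup [seq x.2 | x <- enum_fset S]).
Definition normalize (S : board) : board :=
  [fset ((index x.1 (occ_rows S)).+1, (index x.2 (occ_cols S)).+1) | x in S].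

Definition diag_sq (k : nat) : board := [fset ((i : nat), i) | i in iota 1 k].
Definition upper_sq (k : nat) : board := [fset ((i : nat), i.+1) | i in iota 1 k].
Definition lower_sq (k : nat) : board := [fset ((i : nat).+1, i) | i in iota 1 k].

Definition shape_O (m : nat) : board := diag_sq m `|` upper_sq m.-1.
Definition shape_OT (m : nat) : board := diag_sq m `|` lower_sq m.-1.
Definition shape_E (m : nat) : board := diag_sq m.-1 `|` lower_sq m.-1.
Definition shape_ET (m : nat) : board := diag_sq m.-1 `|` upper_sq m.-1.

Definition staircase_shaped (S : board) : Prop :=
  exists m, 1 <= m /\
    (normalize S = shape_O m \/ normalize S = shape_OT m \/
     normalize S = shape_E m \/ normalize S = shape_ET m).

(* Main.v *)
Require Import Defs.
From mathcomp Require Import all_boot all_order.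
From mathcomp Require Import finmap.
From mathcomp Require Import zify.



Lemma mem_gridseq n (x : nat * nat) :
  (x \in [seq (i, j) | i <- iota 1 n, j <- iota 1 n]) = (1 <= x.1 <= n) && (1 <= x.2 <= n).
Proof.
case: x => i j /=.
apply/allpairsP/idP => [[[a b] /= [ha hb [-> ->]]]|h].
  by move: ha hb; rewrite !mem_iota; lia.
by exists (i, j); rewrite /= !mem_iota; split => //; lia.
Qed.

Lemma mem_grid n x : (x \in grid n) = (1 <= x.1 <= n) && (1 <= x.2 <= n).
Proof. by rewrite /grid in_fset /= mem_gridseq. Qed.

Lemma mod_eq_small (n i j : nat) : 2 <= n -> 1 <= i <= n -> 1 <= j <= n ->
  ((j + 1) %% n == i %% n) = (i == j + 1) || ((i == 1) && (j == n)).
Proof.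
move=> hn hi hj.
have Hi : i %% n = if i == n then 0 else i.
  case: eqP => [->|ne]; first by rewrite modnn.
  by rewrite modn_small //; lia.
have Hj : (j + 1) %% n = if j + 1 == n then 0 else if j == n then 1 else j + 1.
  case: eqP => [->|ne1]; first by rewrite modnn.
  case: eqP => [->|ne2].
    by rewrite modnDl modn_small //; lia.
  by rewrite modn_small //; lia.
rewrite Hi Hj; case: ifP => h1; case: ifP => h2; try case: ifP => h3; lia.
Qed.

Lemma mem_compl n x : 2 <= n ->
  (x \in menage_compl n) = [&& 1 <= x.1 <= n, 1 <= x.2 <= n &
     (x.1 == x.2) || (x.1 == x.2 + 1) || ((x.1 == 1) && (x.2 == n))].
Proof.
move=> hn; rewrite /menage_compl in_fset !inE /= !mem_gridseq.
case: x => i j /=.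
case hi: (1 <= i <= n); case hj: (1 <= j <= n) => //=.
rewrite negb_and !negbK mod_eq_small //; lia.
Qed.

Lemma valid_facts n alpha : valid_prefix n alpha ->
  uniq alpha /\ (forall a, a \in alpha -> 1 <= a <= n).
Proof.
case=> s [[hp _] ->].
split.
  by apply: take_uniq; rewrite (perm_uniq hp) iota_uniq.
move=> a /mem_take; rewrite (perm_mem hp) mem_iota; lia.
Qed.

Lemma count_interval (s : seq nat) m d : uniq s -> count (fun a => m <= a < m + d) s <= d.
Proof.
move=> us; rewrite -size_filter.
rewrite -[X in _ <= X](size_iota m d); apply: uniq_leq_size; first exact: filter_uniq.
by move=> x; rewrite mem_filter mem_iota => /andP[].
Qed.

Lemma count_split (s : seq nat) j k : j <= k ->
  count (fun a => a < k) s = count (fun a => a < j) s + count (fun a => j <= a < k) s.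
Proof. move=> h; elim: s => //= a s ->; lia. Qed.

Lemma count_three (s : seq nat) j :
  count (fun a => a < j) s + count (fun a => j < a) s + count (pred1 j) s = size s.
Proof. elim: s => //= a s <-; lia. Qed.

Definition rc (alpha : seq nat) j := j - count (fun a => a < j) alpha.

Section Alpha.
Variables (n : nat) (alpha : seq nat).
Hypothesis ua : uniq alpha.
Hypothesis ra : forall a, a \in alpha -> 1 <= a <= n.

Lemma cnt_lt j : count (fun a => a < j) alpha <= j.-1.
Proof.
rewrite (@eq_in_count _ _ (fun a => 1 <= a < 1 + j.-1)); first exact: count_interval.
move=> a /ra; lia.
Qed.

Lemma cnt_gt j : count (fun a => j < a) alpha <= n - j.
Proof.
rewrite (@eq_in_count _ _ (fun a => j.+1 <= a < j.+1 + (n - j))); first exact: count_interval.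
move=> a /ra; lia.
Qed.

Lemma cnt_free j : j \notin alpha ->
  count (fun a => a < j) alpha + count (fun a => j < a) alpha = size alpha.
Proof. by move=> /count_memPn h; rewrite -(count_three alpha j) h addn0. Qed.

Lemma rc_range j : 1 <= j <= n -> j \notin alpha -> 1 <= rc alpha j <= n - size alpha.
Proof.
move=> hj hf; rewrite /rc; have := cnt_lt j; have := cnt_gt j; have := cnt_free j hf; lia.
Qed.

Lemma rc_mono j k : j < k -> j \notin alpha -> rc alpha j < rc alpha k.
Proof.
move=> hjk hf; rewrite /rc (count_split alpha j k (ltnW hjk)).
have -> : count (fun a => j <= a < k) alpha = count (fun a => j.+1 <= a < j.+1 + (k - j.+1)) alpha.
  apply: eq_in_count => a ha /=; have : a != j by apply: contraNneq hf => <-.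
  lia.
have := count_interval alpha (j.+1) (k - j.+1) ua; have := cnt_lt j; lia.
Qed.

Lemma rc_inj j k : j \notin alpha -> k \notin alpha -> rc alpha j = rc alpha k -> j = k.
Proof.
move=> hj hk e; case: (ltngtP j k) => // h.
  by have := rc_mono j k h hj; rewrite e ltnn.
by have := rc_mono k j h hk; rewrite e ltnn.
Qed.

Definition fs := [seq i <- iota 1 n | i \notin alpha].

Lemma size_fs : size fs = n - size alpha.
Proof.
rewrite size_filter.
have e : count (mem alpha) (iota 1 n) = size alpha.
  rewrite -size_filter; apply: perm_size; apply: uniq_perm.
  - exact: filter_uniq (iota_uniq _ _).
  - exact: ua.
  by move=> x; rewrite mem_filter mem_iota; apply/andP/idP => [[]//|h]; have := ra _ h; split => //; lia.
have := count_predC (mem alpha) (iota 1 n); rewrite size_iota e.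
have -> : count (predC (mem alpha)) (iota 1 n) = count (fun i => i \notin alpha) (iota 1 n) by [].
lia.
Qed.

Lemma rc_onto x : 1 <= x <= n - size alpha ->
  exists j, [/\ 1 <= j <= n, j \notin alpha & rc alpha j = x].
Proof.
move=> hx.
have u : uniq (map (rc alpha) fs).
  rewrite map_inj_in_uniq; first exact: filter_uniq (iota_uniq _ _).
  by move=> j k; rewrite !mem_filter => /andP[hj _] /andP[hk _]; apply: rc_inj.
have sub : {subset map (rc alpha) fs <= iota 1 (n - size alpha)}.
  move=> y /mapP[j]; rewrite mem_filter mem_iota => /andP[hf hj] ->.
  have := rc_range j ltac:(lia) hf; rewrite mem_iota; lia.
have [_ eqm] := uniq_min_size u sub ltac:(by rewrite size_map size_fs size_iota).
have : x \in iota 1 (n - size alpha) by rewrite mem_iota; lia.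
rewrite -eqm => /mapP[j]; rewrite mem_filter mem_iota => /andP[hf hj] ->.
exists j; split => //; lia.
Qed.

End Alpha.

Definition I (a b : nat) : {fset nat} := [fset i in iota a (b.+1 - a)%N]%fset.

Lemma mem_I a b i : (i \in I a b) = (a <= i <= b).
Proof. rewrite /I in_fset /= mem_iota; lia. Qed.

Lemma consecutive_I a b : consecutive (I a b).
Proof. move=> x y z; rewrite !mem_I; lia. Qed.

Lemma mem_free n alpha i : (i \in free_cols n alpha) = (1 <= i <= n) && (i \notin alpha).
Proof. by rewrite /free_cols in_fset !inE mem_iota. Qed.

Lemma block_interval n alpha P : is_block n alpha P ->
  exists a b, [/\ P = I a b, (1 <= a) && (a <= b) && (b <= n), (forall i, a <= i <= b -> i \notin alpha),
     (a == 1) || (a.-1 \in alpha) & (b == n) || (b.+1 \in alpha)].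
Proof.
case=> hne hsub hcons hmax.
have hfree i : i \in P -> (1 <= i <= n) && (i \notin alpha).
  by move/(fsubsetP hsub); rewrite mem_free.
have exP : exists i, (fun i => i \in P) i by case/fset0Pn: hne => j hj; exists j.
have ubP : forall i, (fun i => i \in P) i -> i <= n by move=> i /hfree; lia.
case: (ex_minnP exP) => a ha amin.
case: (ex_maxnP exP ubP) => b hb bmax.
have PI : P = I a b.
  apply/fsetP => i; rewrite mem_I; apply/idP/idP => [hi|hi].
    by have := amin i hi; have := bmax i hi; lia.
  exact: hcons ha hb hi.
have ha' := hfree a ha; have hb' := hfree b hb.
have fr : forall i, a <= i <= b -> i \notin alpha.
  by move=> i hi; have /hfree := hcons a b i ha hb hi; case/andP.
have ab : a <= b := amin b hb.
exists a, b; split => //.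
- by have := amin b hb; lia.
- case: (boolP (a.-1 \in alpha)) => h; first by rewrite orbT.
  case: eqP => //= ne1; exfalso.
  have e : I a.-1 b = P.
    apply: hmax; first exact: consecutive_I.
      by apply/fsubsetP => i; rewrite PI !mem_I; lia.
    apply/fsubsetP => i; rewrite mem_I mem_free => hi.
    case: (ltnP i a) => hia.
      have -> : i = a.-1 by lia.
      rewrite h andbT; lia.
    by apply/andP; split; [lia | apply: fr; lia].
  have : a.-1 \in P by rewrite -e mem_I; lia.
  by move/amin; lia.
- case: (boolP (b.+1 \in alpha)) => h; first by rewrite orbT.
  case: eqP => //= ne1; exfalso.
  have e : I a b.+1 = P.
    apply: hmax; first exact: consecutive_I.
      by apply/fsubsetP => i; rewrite PI !mem_I; lia.
    apply/fsubsetP => i; rewrite mem_I mem_free => hi.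
    case: (ltnP b i) => hia.
      have -> : i = b.+1 by lia.
      rewrite h andbT; lia.
    by apply/andP; split; [lia | apply: fr; lia].
  have : b.+1 \in P by rewrite -e mem_I; lia.
  by move/bmax; lia.
Qed.

Lemma interval_block n alpha a b : 1 <= a <= b -> b <= n ->
  (forall i, a <= i <= b -> i \notin alpha) -> (a == 1) || (a.-1 \in alpha) ->
  (b == n) || (b.+1 \in alpha) -> is_block n alpha (I a b).
Proof.
move=> hab hbn fr ha hb; split.
- by apply/fset0Pn; exists a; rewrite mem_I; lia.
- by apply/fsubsetP => i; rewrite mem_I mem_free => hi; rewrite fr // andbT; lia.
- exact: consecutive_I.
move=> Q hQ sub subf; apply/fsetP => i; apply/idP/idP; last by apply: (fsubsetP sub).
move=> hi; rewrite mem_I.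
have aQ : a \in Q by apply: (fsubsetP sub); rewrite mem_I; lia.
have bQ : b \in Q by apply: (fsubsetP sub); rewrite mem_I; lia.
have /(fsubsetP subf) := hi; rewrite mem_free => /andP[hi1 hi2].
case: (ltnP i a) => hia.
  have : a.-1 \in Q by apply: (hQ i a) => //; lia.
  move/(fsubsetP subf); rewrite mem_free => /andP[_ h].
  by move: ha; rewrite (negbTE h) orbF; lia.
case: (ltnP b i) => hib; last by [].
have : b.+1 \in Q by apply: (hQ b i) => //; lia.
move/(fsubsetP subf); rewrite mem_free => /andP[_ h].
by move: hb; rewrite (negbTE h) orbF; lia.
Qed.

Lemma exists_block n alpha j : 1 <= j <= n -> j \notin alpha ->
  exists a b, [/\ a <= j <= b & is_block n alpha (I a b)].
Proof.
move=> hj hf.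
have ex1 : exists i, (fun i => (i < j) && ((i == 0) || (i \in alpha))) i by exists 0; lia.
have ub1 : forall i, (fun i => (i < j) && ((i == 0) || (i \in alpha))) i -> i <= j.
  by move=> i /andP[]; lia.
case: (ex_maxnP ex1 ub1) => m /andP[hm1 hm2] mmax.
have ex2 : exists i, (fun i => (j < i) && ((i == n.+1) || (i \in alpha))) i.
  by exists n.+1; rewrite eqxx; lia.
case: (ex_minnP ex2) => M /andP[hM1 hM2] Mmin.
have hMn : M <= n.+1 by apply: Mmin; rewrite eqxx; lia.
exists m.+1, M.-1; split; first by lia.
apply: interval_block; try lia.
- move=> i hi; apply/negP => ia.
  case: (ltngtP i j) => hij.
  + by have := mmax i; rewrite hij ia orbT => /(_ isT); lia.
  + by have := Mmin i; rewrite hij ia orbT => /(_ isT); lia.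
  + by move: hf; rewrite -hij ia.
- by move: hm2 => /orP[/eqP ->|h] //=; rewrite h orbT.
- have -> : M.-1.+1 = M by lia.
  by move: hM2 => /orP[/eqP ->|h] //=; rewrite ?eqxx // h orbT.
Qed.

Definition shift (r c : nat) (u : nat * nat) := (u.1 + r, u.2 + c).

Lemma mem_shift (U : {fset nat * nat}) r c y :
  (y \in (shift r c @` U)%fset) = [&& r <= y.1, c <= y.2 & (y.1 - r, y.2 - c) \in U].
Proof.
apply/imfsetP/idP => [[u /= hu ->]|/and3P[h1 h2 h3]].
  by rewrite /shift /= !leq_addl !addnK -surjective_pairing hu.
exists (y.1 - r, y.2 - c) => //; rewrite /shift /= !subnK //; by case: y {h3} h1 h2.
Qed.

Lemma index_iota_shift r p i : 1 <= i <= p -> index (i + r) (iota r.+1 p) = i.-1.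
Proof.
move=> hi.
have -> : i + r = nth 0 (iota r.+1 p) i.-1 by rewrite nth_iota; lia.
by rewrite index_uniq ?iota_uniq // size_iota; lia.
Qed.

Lemma occ_shift (f : nat * nat -> nat) r p (S : {fset nat * nat}) :
  (forall y, y \in S -> 1 <= f y - r <= p /\ r < f y) ->
  (forall i, 1 <= i <= p -> exists2 y, y \in S & f y = i + r) ->
  sort leq (undup [seq f x | x <- enum_fset S]) = iota r.+1 p.
Proof.
move=> h1 h2.
apply: (@sorted_eq _ leq leq_trans anti_leq).
- exact: sort_sorted leq_total _.
- exact: iota_sorted.
rewrite perm_sort; apply: uniq_perm; [exact: undup_uniq | exact: iota_uniq |].
move=> x; rewrite mem_undup mem_iota; apply/mapP/idP => [[y hy ->]|hx].
  by have [] := h1 y hy; lia.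
have [y hy e] := h2 (x - r) ltac:(lia).
by exists y => //; rewrite e; lia.
Qed.

Lemma normalize_shift (U : {fset nat * nat}) r c p q :
  (forall u, u \in U -> (1 <= u.1 <= p) && (1 <= u.2 <= q)) ->
  (forall i, 1 <= i <= p -> exists j, (i, j) \in U) ->
  (forall j, 1 <= j <= q -> exists i, (i, j) \in U) ->
  normalize (shift r c @` U)%fset = U.
Proof.
move=> hU hp hq.
set S := (shift r c @` U)%fset.
have hS y : y \in S -> [/\ 1 <= y.1 - r <= p, r < y.1, 1 <= y.2 - c <= q & c < y.2].
  rewrite mem_shift => /and3P[a b /hU] /= h; split; lia.
have er : occ_rows S = iota r.+1 p.
  apply: (@occ_shift fst r p S) => [y /hS [] *|i hi]; first by split.
  have [j hj] := hp i hi; exists (i + r, j + c); last by [].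
  by apply/imfsetP; exists (i, j).
have ec : occ_cols S = iota c.+1 q.
  apply: (@occ_shift snd c q S) => [y /hS [] *|j hj]; first by split.
  have [i hi] := hq j hj; exists (i + r, j + c); last by [].
  by apply/imfsetP; exists (i, j).
rewrite /normalize er ec /S -imfset_comp.
rewrite -[RHS]imfset_id; apply: eq_in_imfset => u hu /=.
have /andP[h1 h2] := hU u hu.
rewrite /shift /= !index_iota_shift //; case: u {hu} h1 h2 => x y /= h1 h2; congr (_, _); lia.
Qed.

Lemma mem_diag k x : (x \in diag_sq k) = (x.1 == x.2) && (1 <= x.1 <= k).
Proof.
apply/imfsetP/idP => [[i /= hi ->]|/andP[/eqP e h]] /=.
  by move: hi; rewrite mem_iota eqxx /=; lia.
exists x.1; first by rewrite mem_iota; lia.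
by case: x e {h} => a b /= ->.
Qed.

Lemma mem_upper k x : (x \in upper_sq k) = (x.2 == x.1.+1) && (1 <= x.1 <= k).
Proof.
apply/imfsetP/idP => [[i /= hi ->]|/andP[/eqP e h]] /=.
  by move: hi; rewrite mem_iota eqxx /=; lia.
exists x.1; first by rewrite mem_iota; lia.
by case: x e {h} => a b /= ->.
Qed.

Lemma mem_lower k x : (x \in lower_sq k) = (x.1 == x.2.+1) && (1 <= x.2 <= k).
Proof.
apply/imfsetP/idP => [[i /= hi ->]|/andP[/eqP e h]] /=.
  by move: hi; rewrite mem_iota eqxx /=; lia.
exists x.2; first by rewrite mem_iota; lia.
by case: x e {h} => a b /= ->.
Qed.

Lemma card_diag k : #|` diag_sq k|%fset = k.
Proof.
rewrite card_imfset; last by move=> i j [].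
rewrite (perm_size (uniq_perm (enum_finmem_uniq _) (iota_uniq 1 k) _)) ?size_iota //.
by move=> x; rewrite enum_finmemE.
Qed.

Lemma card_upper k : #|` upper_sq k|%fset = k.
Proof.
rewrite card_imfset; last by move=> i j [].
rewrite (perm_size (uniq_perm (enum_finmem_uniq _) (iota_uniq 1 k) _)) ?size_iota //.
by move=> x; rewrite enum_finmemE.
Qed.

Lemma card_lower k : #|` lower_sq k|%fset = k.
Proof.
rewrite card_imfset; last by move=> i j [].
rewrite (perm_size (uniq_perm (enum_finmem_uniq _) (iota_uniq 1 k) _)) ?size_iota //.
by move=> x; rewrite enum_finmemE.
Qed.

Lemma card_disj (A B : {fset nat * nat}) : (forall x, x \in A -> x \in B -> False) ->
  #|` (A `|` B)|%fset = #|` A|%fset + #|` B|%fset.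
Proof.
move=> h; have := cardfsUI A B.
have -> : (A `&` B)%fset = fset0.
  by apply/fsetP => x; rewrite in_fsetI in_fset0; apply/andP => -[/h].
by rewrite cardfs0 addn0.
Qed.

Definition memE := (in_fsetU, mem_diag, mem_upper, mem_lower).

Lemma card_O m : #|` shape_O m|%fset = m + m.-1.
Proof. rewrite card_disj ?card_diag ?card_upper // => x; rewrite !memE; lia. Qed.
Lemma card_OT m : #|` shape_OT m|%fset = m + m.-1.
Proof. rewrite card_disj ?card_diag ?card_lower // => x; rewrite !memE; lia. Qed.
Lemma card_E m : #|` shape_E m|%fset = m.-1 + m.-1.
Proof. rewrite card_disj ?card_diag ?card_lower // => x; rewrite !memE; lia. Qed.
Lemma card_ET m : #|` shape_ET m|%fset = m.-1 + m.-1.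
Proof. rewrite card_disj ?card_diag ?card_upper // => x; rewrite !memE; lia. Qed.

Lemma norm_O m r c : 1 <= m -> normalize (shift r c @` shape_O m)%fset = shape_O m.
Proof.
move=> hm; apply: (@normalize_shift _ r c m m).
- by move=> u; rewrite !memE; lia.
- by move=> i hi; exists i; rewrite !memE /=; lia.
- by move=> j hj; exists j; rewrite !memE /=; lia.
Qed.

Lemma norm_OT m r c : 1 <= m -> normalize (shift r c @` shape_OT m)%fset = shape_OT m.
Proof.
move=> hm; apply: (@normalize_shift _ r c m m).
- by move=> u; rewrite !memE; lia.
- by move=> i hi; exists i; rewrite !memE /=; lia.
- by move=> j hj; exists j; rewrite !memE /=; lia.
Qed.

Lemma norm_E m r c : 1 <= m -> normalize (shift r c @` shape_E m)%fset = shape_E m.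
Proof.
case: m => [//|[|m]] _.
  apply: (@normalize_shift _ r c 0 0); try (move=> ?; lia).
  by move=> u; rewrite !memE; lia.
apply: (@normalize_shift _ r c m.+2 m.+1).
- by move=> u; rewrite !memE; lia.
- move=> i hi; case: (ltnP i m.+2) => h.
    by exists i; rewrite !memE /=; lia.
  by exists i.-1; rewrite !memE /=; lia.
- by move=> j hj; exists j; rewrite !memE /=; lia.
Qed.

Lemma norm_ET m r c : 1 <= m -> normalize (shift r c @` shape_ET m)%fset = shape_ET m.
Proof.
case: m => [//|[|m]] _.
  apply: (@normalize_shift _ r c 0 0); try (move=> ?; lia).
  by move=> u; rewrite !memE; lia.
apply: (@normalize_shift _ r c m.+1 m.+2).
- by move=> u; rewrite !memE; lia.
- by move=> i hi; exists i; rewrite !memE /=; lia.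
- move=> j hj; case: (ltnP j m.+2) => h.
    by exists j; rewrite !memE /=; lia.
  by exists j.-1; rewrite !memE /=; lia.
Qed.

Lemma mem_sel (T : choiceType) (A : {fset T}) (P : pred T) x :
  (x \in [fset y in A | P y]%fset) = (x \in A) && P x.
Proof. by rewrite in_fset inE. Qed.

Lemma mem_compl' n x : (x \in menage_compl n) = (x \in grid n) && (x \notin menage_board n).
Proof. by rewrite /menage_compl mem_sel. Qed.

Lemma enum_I a b : perm_eq (enum_fset (I a b)) (index_iota a b.+1).
Proof.
apply: uniq_perm; [exact: fset_uniq | exact: iota_uniq |].
by move=> x; rewrite mem_index_iota -mem_I.
Qed.

Section Block.
Variables (n : nat) (alpha : seq nat).
Hypothesis ua : uniq alpha.
Hypothesis ra : forall a, a \in alpha -> 1 <= a <= n.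
Hypothesis hn : 3 <= n.
Hypothesis hl : 1 <= size alpha < n.

Lemma sumF x : x <= n -> \sum_(1 <= i < x.+1) cw n alpha i =
  if x < size alpha then 0 else if x < n then 2 * (x - size alpha) + 1 else 2 * (n - size alpha).
Proof.
elim: x => [|x IH] hx; first by rewrite big_geq //; case: ifP => //; lia.
rewrite big_nat_recr //= IH; last lia.
rewrite /cw; repeat (case: ifP => ?); lia.
Qed.


Lemma cnt_block a b j : (forall i, a <= i <= b -> i \notin alpha) -> a <= j <= b ->
  count (fun x => x < j) alpha = count (fun x => x < a) alpha.
Proof.
move=> fr hj; rewrite (count_split alpha a j (andP hj).1).
suff -> : count (fun x => a <= x < j) alpha = 0 by rewrite addn0.
apply/eqP; rewrite -leqn0 leqNgt -has_count.
apply/hasPn => x hx; apply/negP => h; have := fr x ltac:(lia); by rewrite hx.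
Qed.

Lemma sub_board_shift a b (U : {fset nat * nat}) R C :
  size alpha <= R -> count (fun x => x < a) alpha <= C ->
  (forall i, a <= i <= b -> i \notin alpha) ->
  (forall y, [&& y \in menage_compl n, size alpha < y.1 & a <= y.2 <= b] =
             [&& R <= y.1, C <= y.2 & (y.1 - R, y.2 - C) \in U]) ->
  sub_board n alpha (I a b) = (shift (R - size alpha) (C - count (fun x => x < a) alpha) @` U)%fset.
Proof.
move=> hR hC fr hy.
rewrite /sub_board.
have eT : forall S : {fset nat * nat},
    (forall y, (y \in S) = [&& y \in menage_compl n, size alpha < y.1 & a <= y.2 <= b]) ->
    (relab alpha @` S)%fset = (shift (R - size alpha) (C - count (fun x => x < a) alpha) @` U)%fset.
  move=> S hS.
  have -> : S = (shift R C @` U)%fset by apply/fsetP => y; rewrite hS hy mem_shift.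
  rewrite -imfset_comp; apply: eq_in_imfset => u hu /=.
  have : shift R C u \in S by rewrite hS hy /shift /= !leq_addl !addnK -surjective_pairing.
  rewrite hS => /and3P[_ _ hj].
  rewrite /relab /shift /= (cnt_block a b _ fr hj).
  by case: u {hu hj} => u1 u2 /=; congr pair; lia.
apply: eT => y; rewrite mem_sel mem_I.
by [].
Qed.

End Block.

Lemma card_shift (U : {fset nat * nat}) r c : #|` (shift r c @` U)%fset |%fset = #|` U|%fset.
Proof.
rewrite card_imfset; last by move=> [x1 x2] [y1 y2] [] /= e1 e2; congr pair; lia.
apply: perm_size; apply: uniq_perm; [exact: enum_finmem_uniq | exact: fset_uniq |].
by move=> x; rewrite enum_finmemE.
Qed.

Lemma block_result (n : nat) (alpha : seq nat) (a b : nat) : uniq alpha -> (forall x, x \in alpha -> 1 <= x <= n) ->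
  3 <= n -> 1 <= size alpha < n -> 1 <= a <= b -> b <= n ->
  (forall i, a <= i <= b -> i \notin alpha) ->
  staircase_shaped (sub_board n alpha (I a b)) /\
  #|` sub_board n alpha (I a b)|%fset = \sum_(p <- enum_fset (I a b)) cw n alpha p.
Proof.
move=> ua ra hn hl hab hbn fr.
have hc := cnt_lt n alpha ua ra a.
rewrite (perm_big _ (enum_I a b)) /=.
have hsum : \sum_(a <= i < b.+1) cw n alpha i + \sum_(1 <= i < a) cw n alpha i =
            \sum_(1 <= i < b.+1) cw n alpha i.
  by rewrite addnC -big_cat_nat //; lia.
have h1 := sumF n alpha ua hn hl b hbn.
have h2 := sumF n alpha ua hn hl a.-1 ltac:(lia).
rewrite prednK in h2; last lia.
move: hsum; rewrite h1 h2; clear h1 h2.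
have SB := sub_board_shift n alpha ua hn hl a b.
case: (ltnP b (size alpha)) => hbl.
  have e := SB (shape_E 1) (size alpha) (count (fun x => x < a) alpha).
  rewrite e {e}; last (move=> y; rewrite mem_compl; [rewrite /shape_E /shape_O /shape_OT /shape_ET !in_fsetU !mem_diag ?mem_upper ?mem_lower /=; lia | lia]); last exact: fr; last lia; last lia.
  move=> hsum; split; first by exists 1; split => //; right; right; left; apply: norm_E.
  rewrite card_shift card_E; move: hsum; repeat (case: ifP => ?); lia.
case: (leqP a (size alpha)) => hal.
  case: (ltnP b n) => hbn'.
    rewrite (SB (shape_O (b - size alpha).+1) (size alpha) (size alpha).-1 ltac:(lia) ltac:(lia) fr ltac:(move=> y; rewrite mem_compl; [rewrite /shape_E /shape_O /shape_OT /shape_ET !in_fsetU !mem_diag ?mem_upper ?mem_lower /=; lia | lia])).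
    move=> hsum; split; first by exists (b - size alpha).+1; split => //; left; apply: norm_O.
    rewrite card_shift card_O; move: hsum; repeat (case: ifP => ?); lia.
  have ebn : b = n by lia.
  rewrite (SB (shape_ET (n - size alpha).+1) (size alpha) (size alpha).-1 ltac:(lia) ltac:(lia) fr ltac:(move=> y; rewrite mem_compl; [rewrite /shape_E /shape_O /shape_OT /shape_ET !in_fsetU !mem_diag ?mem_upper ?mem_lower /=; lia | lia])).
  move=> hsum; split; first by exists (n - size alpha).+1; split => //; right; right; right; apply: norm_ET.
  rewrite card_shift card_ET; move: hsum; repeat (case: ifP => ?); lia.
case: (ltnP b n) => hbn'.
  rewrite (SB (shape_E (b - a).+2) a.-1 a.-1 ltac:(lia) ltac:(lia) fr ltac:(move=> y; rewrite mem_compl; [rewrite /shape_E /shape_O /shape_OT /shape_ET !in_fsetU !mem_diag ?mem_upper ?mem_lower /=; lia | lia])).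
  move=> hsum; split; first by exists (b - a).+2; split => //; right; right; left; apply: norm_E.
  rewrite card_shift card_E; move: hsum; repeat (case: ifP => ?); lia.
have ebn : b = n by lia.
rewrite (SB (shape_OT (n - a).+1) a.-1 a.-1 ltac:(lia) ltac:(lia) fr ltac:(move=> y; rewrite mem_compl; [rewrite /shape_E /shape_O /shape_OT /shape_ET !in_fsetU !mem_diag ?mem_upper ?mem_lower /=; lia | lia])).
move=> hsum; split; first by exists (n - a).+1; split => //; right; left; apply: norm_OT.
rewrite card_shift card_OT; move: hsum; repeat (case: ifP => ?); lia.
Qed.



Lemma sep_blocks (n : nat) (alpha : seq nat) a b a' b' :
  1 <= a <= b -> b <= n -> 1 <= a' <= b' -> b' <= n ->
  (forall i, a <= i <= b -> i \notin alpha) ->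
  (forall i, a' <= i <= b' -> i \notin alpha) ->
  (a == 1) || (a.-1 \in alpha) -> (b == n) || (b.+1 \in alpha) ->
  (a' == 1) || (a'.-1 \in alpha) -> (b' == n) || (b'.+1 \in alpha) ->
  I a b != I a' b' -> (b.+1 < a') \/ (b'.+1 < a).
Proof.
move=> h1 h2 h3 h4 fr fr' ca cb ca' cb' ne.
case: (ltnP b.+1 a') => e1; first by left.
case: (ltnP b'.+1 a) => e2; first by right.
exfalso.
have [aa|aa|aa] := ltngtP a a'.
- by move: ca'; rewrite (negbTE (fr a'.-1 ltac:(lia))) orbF; lia.
- by move: ca; rewrite (negbTE (fr' a.-1 ltac:(lia))) orbF; lia.
have [bb|bb|bb] := ltngtP b b'.
- by move: cb; rewrite (negbTE (fr' b.+1 ltac:(lia))) orbF; lia.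
- by move: cb'; rewrite (negbTE (fr b'.+1 ltac:(lia))) orbF; lia.
by move: ne; rewrite aa bb eqxx.
Qed.

Lemma disj_sym (S T : {fset nat * nat}) : disjoint_boards S T -> disjoint_boards T S.
Proof. by move=> h x y hx hy; have [] := h y x hy hx; rewrite ![_ == x.1]eq_sym ![_ == x.2]eq_sym. Qed.

Lemma disj_sep (n : nat) (alpha : seq nat) a b a' b' : uniq alpha ->
  (forall x, x \in alpha -> 1 <= x <= n) -> 3 <= n -> 1 <= size alpha ->
  (forall i, a <= i <= b -> i \notin alpha) -> b.+1 < a' ->
  disjoint_boards (sub_board n alpha (I a b)) (sub_board n alpha (I a' b')).
Proof.
move=> ua ra hn hl fr hsep x y /imfsetP[[u1 u2] hu ->] /imfsetP[[v1 v2] hv ->].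
move: hu; rewrite mem_sel mem_I mem_compl /=; last lia.
move=> /and4P[/and3P[hu1 hu2 hu3] hu4 hu5 hu6].
move: hv; rewrite mem_sel mem_I mem_compl /=; last lia.
move=> /and4P[/and3P[hv1 hv2 hv3] hv4 hv5 hv6].
rewrite /relab /=; split; first lia.
have := rc_mono n alpha ua ra u2 v2 ltac:(lia) (fr u2 ltac:(lia)).
rewrite /rc; lia.
Qed.

Local Open Scope fset_scope.

Theorem mainTheorem9 (n : nat) (alpha : seq nat) (Ps : seq {fset nat}) :
  3 <= n ->
  valid_prefix n alpha ->
  1 <= size alpha < n ->
  uniq Ps ->
  (forall P, P \in Ps <-> is_block n alpha P) ->
  [/\ derived_compl n alpha = \bigcup_(P <- Ps) sub_board n alpha P,
      (forall P Q, P \in Ps -> Q \in Ps -> P != Q ->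
         disjoint_boards (sub_board n alpha P) (sub_board n alpha Q)),
      (forall P, P \in Ps ->
         staircase_shaped (sub_board n alpha P) /\
         #|` sub_board n alpha P| = \sum_(p <- enum_fset P) cw n alpha p) &
      perm_eq [seq #|` sub_board n alpha P| | P <- Ps]
              [seq \sum_(p <- enum_fset P) cw n alpha p | P <- Ps]].
Proof.
move=> hn hv hl uPs hPs.
have [ua ra] := valid_facts n alpha hv.
have hl1 : (1 <= size alpha)%N by case/andP: hl.
have hblk : forall P, P \in Ps -> exists a b, [/\ P = I a b, (1 <= a)%N && (a <= b)%N && (b <= n)%N,
   (forall i, (a <= i <= b)%N -> i \notin alpha), (a == 1) || (a.-1 \in alpha) &
   (b == n) || (b.+1 \in alpha)].
  by move=> P /hPs /block_interval.
have p3 : forall P, P \in Ps -> staircase_shaped (sub_board n alpha P) /\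
         #|` sub_board n alpha P| = \sum_(p <- enum_fset P) cw n alpha p.
  move=> P /hblk [a [b [-> hab fr _ _]]].
  apply: block_result => //; lia.
split; [ | | exact: p3 | ].
- apply/fsetP => x; rewrite /derived_compl mem_sel mem_grid.
  apply/idP/bigfcupP.
  + case: x => x1 x2 /=; case/andP => hx hnot.
    have [j [hj hjf hrc]] := rc_onto n alpha ua ra x2 ltac:(lia).
    have hy : (x1 + size alpha, j)%N \in menage_compl n.
      rewrite mem_compl' mem_grid /=; apply/andP; split; first lia.
      apply/negP => hb; move/negP: hnot; apply; apply/imfsetP.
      exists (x1 + size alpha, j)%N; first by rewrite mem_sel hb /= hjf andbT; lia.
      rewrite /relab /=; move: hrc; rewrite /rc => ->; rewrite addnK.
      by [].
    have [a [b [hab hblock]]] := exists_block n alpha j hj hjf.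
    exists (I a b); first by rewrite andbT; apply/hPs.
    apply/imfsetP; exists (x1 + size alpha, j)%N; first by rewrite mem_sel hy /= mem_I; lia.
    rewrite /relab /=; move: hrc; rewrite /rc => ->; rewrite addnK.
    by [].
  + case=> P /andP[hP _] /imfsetP[[y1 y2] hy ->].
    have [a [b [eP hab fr _ _]]] := hblk P hP.
    move: hy; rewrite mem_sel eP mem_I /= => /andP[hyc /andP[hyl hyP]].
    have hyc' := hyc; rewrite mem_compl /= in hyc'; last lia.
    have hf : y2 \notin alpha by apply: fr.
    have := rc_range n alpha ua ra y2 ltac:(lia) hf.
    rewrite /rc => hr.
    apply/andP; split; first by rewrite /relab /=; lia.
    apply/negP => /imfsetP[[z1 z2] hz e].
    move: hz; rewrite mem_sel /= => /andP[hzb /andP[hzl hzf]].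
    move: e; rewrite /relab /= => -[e1 e2].
    have ez : z2 = y2.
      by apply: (rc_inj n alpha ua ra z2 y2 hzf hf); rewrite /rc -e2.
    have ez1 : z1 = y1 by lia.
    by move: hyc; rewrite mem_compl' => /andP[_]; rewrite -ez -ez1 hzb.
- move=> P Q hP hQ ne.
  have [a [b [eP hab fr ca cb]]] := hblk P hP.
  have [a' [b' [eQ hab' fr' ca' cb']]] := hblk Q hQ.
  rewrite eP eQ in ne *.
  have [h|h] := sep_blocks n alpha a b a' b' ltac:(lia) ltac:(lia) ltac:(lia) ltac:(lia)
                  fr fr' ca cb ca' cb' ne.
  + exact: (disj_sep n alpha a b a' b' ua ra hn hl1 fr h).
  + by apply: disj_sym; exact: (disj_sep n alpha a' b' a b ua ra hn hl1 fr' h).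
- have -> : [seq #|` sub_board n alpha P| | P <- Ps] =
            [seq \sum_(p <- enum_fset P) cw n alpha p | P <- Ps].
    by apply/eq_in_map => P hP; exact: (p3 P hP).2.
  exact: perm_refl.
Qed.
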